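(* Let $\underline\delta\ge1$ be an integer and $\pi$ the switching policy $(0,\underline\delta)$ (transmit in $(0,0,0)$, in every state $(1,0,\delta)$, $\delta\ge1$, and in $(0,1,\delta)$ for $\delta\ge\underline\delta$). Define $a_1=\frac{pp_f}{1-\bar qp_f}$, $A=\frac{p}{\bar q(1-\bar qp_f)}$, $B=\frac{q\bar p^{\underline\delta-1}}{1-\bar pp_f}$, $b_1=\frac{q(1-\bar p^{\underline\delta-1})}{1-\bar p}+B$, $D=(1+a_1)\bar pB+(1+b_1)\bar qA$. Then the stationary distribution of $\{S_t\}$ under $\pi$ is $\nu_{0,0,0}=\bar pB/D$, $\nu_{1,1,0}=\bar qA/D$, $\nu_{1,0,k}=pp_f(\bar qp_f)^{k-1}\nu_{0,0,0}$ for $k\ge1$, $\nu_{0,1,k}=q\bar p^{k-1}\nu_{1,1,0}$ for $1\le k\le\underline\delta$ and $\nu_{0,1,k}=q\bar p^{\underline\delta-1}(\bar pp_f)^{k-\underline\delta}\nu_{1,1,0}$ for $k>\underline\delta$. Moreover, $$\mathcal L(\pi)=\frac{\beta pp_f\nu_{0,0,0}}{(1-\bar qp_f)^2}+(1-\beta)q\,\psi(\bar p,\underline\delta)\,\nu_{1,1,0}+\lambda\big((1+a_1)\nu_{0,0,0}+B\nu_{1,1,0}\big),$$ where $\psi(x,y)=\frac{1-(x+(1-x)y)x^{y-1}}{(1-x)^2}+\frac{(xp_f+(1-xp_f)y)x^{y-1}}{(1-xp_f)^2}$.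
   Context: Fix $p,q\in(0,1)$, $\bar p=1-p$, $\bar q=1-q$. The source $\{X_t\}$ is a Markov chain on $\{0,1\}$ with $\Pr[X_{t+1}=1\mid X_t=0]=p$, $\Pr[X_{t+1}=0\mid X_t=1]=q$; channel i.i.d. Bernoulli with success probability $p_s\in(0,1]$, independent of the source, $p_f=1-p_s$. Estimate dynamics: if $A_t=1$ and the transmission succeeds then $\hat X_{t+1}=X_{t+1}$, otherwise $\hat X_{t+1}=\hat X_t$. Age: $\Delta_{t+1}=\Delta_t+1$ if $X_{t+1}\ne\hat X_{t+1}$, else $0$. State $S_t=(X_t,\hat X_t,\Delta_t)\in\mathcal S=\{(0,0,0),(1,1,0)\}\cup\{(1,0,\delta),(0,1,\delta):\delta\ge1\}$, $S_1=(0,0,0)$; $\nu_{i,j,\delta}$ is the stationary probability of $(i,j,\delta)$. Per-state cost $c(s)=\beta\delta$ for $s=(1,0,\delta)$, $(1-\beta)\delta$ for $s=(0,1,\delta)$, $0$ for synced states, $\beta\in[0,1]$; per-stage cost $\ell(s,a)=\mathbb E[c(S_{t+1})\mid S_t=s,A_t=a]+\lambda\mathbb 1\{a=1\}$, $\lambda\ge0$; average cost $\mathcal L(\pi)=\limsup_{T\to\infty}\frac1T\sum_{t=1}^T\mathbb E^\pi[\ell(S_t,A_t)\mid S_1=(0,0,0)]$. The switching policy $(\bar\delta,\underline\delta)$ ($\bar\delta,\underline\delta\ge0$ integers) transmits iff $S_t=(1,0,\delta)$ with $\delta\ge\bar\delta$, or $S_t=(0,1,\delta)$ with $\delta\ge\underline\delta$,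 or ($\bar\delta=0$ and $S_t=(0,0,0)$), or ($\underline\delta=0$ and $S_t=(1,1,0)$). *)

(* Defs.v *)
From Stdlib Require Import Reals List.
From Coquelicot Require Import Coquelicot.
Import ListNotations.
Open Scope R_scope.

(* State space S = {(0,0,0),(1,1,0)} u {(1,0,d),(0,1,d) : d >= 1}.
   S10 n denotes (1,0,n+1) and S01 n denotes (0,1,n+1)  (shifted index). *)
Inductive State : Type :=
| S000 : State
| S110 : State
| S10 : nat -> State
| S01 : nat -> State.

Definition state_eq_dec (s t : State) : {s = t} + {s <> t}.
Proof. decide equality; apply PeanoNat.Nat.eq_dec. Defined.

Definition sx (s : State) : bool :=
  match s with S000 => false | S110 => true | S10 _ => true | S01 _ => false end.
Definition sxh (s : State) : bool :=
  match s with S000 => false | S110 => true | S10 _ => false | S01 _ => true end.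
Definition sage (s : State) : nat :=
  match s with S000 | S110 => 0%nat | S10 n | S01 n => S n end.

(* builds the state (x, xh, d); only used with consistent arguments
   (d = 0 iff x = xh) *)
Definition mk (x xh : bool) (d : nat) : State :=
  if Bool.eqb x xh then (if x then S110 else S000)
  else (if x then S10 (pred d) else S01 (pred d)).

Definition xnext (p q : R) (x : bool) : list (bool * R) :=
  if x then [(false, q); (true, 1 - q)] else [(true, p); (false, 1 - p)].

(* successors of state s under action a, with their probabilities
   (p_s = success probability of the channel) *)
Definition succ (p q ps : R) (a : bool) (s : State) : list (State * R) :=
  flat_map (fun xr : bool * R =>
    let (x', pr) := xr in
    let noupd := if Bool.eqb x' (sxh s) then mk x' (sxh s) 0
                 else mk x' (sxh s) (S (sage s)) in
    if a then [(mk x' x' 0, pr * ps); (noupd, pr * (1 - ps))]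
    else [(noupd, pr)]) (xnext p q (sx s)).

Definition trans (p q ps : R) (a : bool) (s s' : State) : R :=
  fold_right (fun sr acc => (if state_eq_dec (fst sr) s' then snd sr else 0) + acc)
    0 (succ p q ps a s).

Definition switching (dbar dund : nat) (s : State) : bool :=
  match s with
  | S000 => Nat.eqb dbar 0
  | S110 => Nat.eqb dund 0
  | S10 n => Nat.leb dbar (S n)
  | S01 n => Nat.leb dund (S n)
  end.

Definition cost (beta : R) (s : State) : R :=
  match s with
  | S000 | S110 => 0
  | S10 n => beta * INR (S n)
  | S01 n => (1 - beta) * INR (S n)
  end.

Definition stage_cost (p q ps beta lambda : R) (s : State) (a : bool) : R :=
  fold_right (fun sr acc => snd sr * cost beta (fst sr) + acc) 0 (succ p q ps a s)
  + lambda * (if a then 1 else 0).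

(* E^pi[ f(S_{n+1}) | S_1 = s ] for a deterministic stationary policy pi *)
Fixpoint expect (p q ps : R) (pi : State -> bool) (n : nat) (s : State)
  (f : State -> R) : R :=
  match n with
  | O => f s
  | S m => fold_right (fun sr acc => snd sr * expect p q ps pi m (fst sr) f + acc)
             0 (succ p q ps (pi s) s)
  end.

(* average cost L(pi) = limsup_T (1/T) sum_{t=1}^T E^pi[l(S_t,A_t) | S_1 = (0,0,0)];
   the sequence below is indexed by T-1 (an index shift, same limsup). *)
Definition avg_cost (p q ps beta lambda : R) (pi : State -> bool) : Rbar :=
  LimSup_seq (fun T => / INR (S T) *
    sum_f_R0 (fun k => expect p q ps pi k S000
                (fun s => stage_cost p q ps beta lambda s (pi s))) T).

Definition sum_state (f : State -> R) (l : R) : Prop :=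
  exists a b, is_series (fun n => f (S10 n)) a /\ is_series (fun n => f (S01 n)) b /\
    l = f S000 + f S110 + a + b.

Definition stationary (p q ps : R) (pi : State -> bool) (nu : State -> R) : Prop :=
  (forall s, 0 <= nu s) /\ sum_state nu 1 /\
  forall s', sum_state (fun s => nu s * trans p q ps (pi s) s s') (nu s').

(* Main.v *)
Require Import Defs.
From Stdlib Require Import Reals List Lra Lia Field.
From Coquelicot Require Import Coquelicot.
Import ListNotations.
Open Scope R_scope.

Definition Fl (l : list (State * R)) (f : State -> R) : R :=
  fold_right (fun sr acc => snd sr * f (fst sr) + acc) 0 l.

Lemma Fl_ext l f g : (forall x, f x = g x) -> Fl l f = Fl l g.
Proof. intros H; induction l as [|[s r] l IH]; simpl; [reflexivity| rewrite H, IH; reflexivity]. Qed.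

Lemma Fl_lin l a b c f g :
  Fl l (fun x => a * f x + b * g x + c) = a * Fl l f + b * Fl l g + c * Fl l (fun _ => 1).
Proof. induction l as [|[s r] l IH]; simpl; [ring| rewrite IH; ring]. Qed.

Lemma Fl_mono l f g : List.Forall (fun sr => 0 <= snd sr) l -> (forall x, f x <= g x) -> Fl l f <= Fl l g.
Proof.
  intros Hl H; induction l as [|[s r] l IH]; simpl; [lra|].
  inversion Hl as [|x y Hx Hrest]; subst. simpl in *. specialize (IH Hrest). specialize (H s). nra.
Qed.

Lemma succ_nonneg p q ps a s : 0 <= p <= 1 -> 0 <= q <= 1 -> 0 <= ps <= 1 ->
  List.Forall (fun sr => 0 <= snd sr) (succ p q ps a s).
Proof.
  intros Hp Hq Hs.
  assert (H1 : 0 <= 1 - p) by lra. assert (H2 : 0 <= 1 - q) by lra. assert (H3 : 0 <= 1 - ps) by lra.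
  destruct a, s; unfold succ; simpl; repeat (apply List.Forall_cons); try apply List.Forall_nil; simpl;
    try apply Rmult_le_pos; try lra.
Qed.

Lemma succ_mass p q ps a s : Fl (succ p q ps a s) (fun _ => 1) = 1.
Proof. destruct a, s; unfold Fl, succ; simpl; ring. Qed.

Definition Pf p q ps (pi : State -> bool) (f : State -> R) (s : State) : R :=
  Fl (succ p q ps (pi s) s) f.

Lemma expect_S p q ps pi m s f :
  expect p q ps pi (S m) s f = Pf p q ps pi (fun s' => expect p q ps pi m s' f) s.
Proof. reflexivity. Qed.

Lemma expect_ext p q ps pi m s f g : (forall x, f x = g x) ->
  expect p q ps pi m s f = expect p q ps pi m s g.
Proof.
  intros H; revert s; induction m as [|m IH]; intros s; simpl; [apply H|].
  apply (Fl_ext _ (fun s' => expect p q ps pi m s' f) (fun s' => expect p q ps pi m s' g)).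
  intros; apply IH.
Qed.

Lemma expect_comm p q ps pi m s f :
  expect p q ps pi (S m) s f = expect p q ps pi m s (Pf p q ps pi f).
Proof.
  revert s; induction m as [|m IH]; intros s.
  - reflexivity.
  - rewrite expect_S. unfold Pf at 1.
    change (expect p q ps pi (S m) s (Pf p q ps pi f)) with
      (Fl (succ p q ps (pi s) s) (fun s' => expect p q ps pi m s' (Pf p q ps pi f))).
    apply Fl_ext. intros x. apply IH.
Qed.

Lemma expect_lin p q ps pi m s a b c f g :
  expect p q ps pi m s (fun x => a * f x + b * g x + c) =
  a * expect p q ps pi m s f + b * expect p q ps pi m s g + c.
Proof.
  revert s; induction m as [|m IH]; intros s; [reflexivity|].
  rewrite !expect_S. unfold Pf.
  rewrite (Fl_ext _ _ (fun x => a * expect p q ps pi m x f + b * expect p q ps pi m x g + c)).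
  - rewrite Fl_lin, succ_mass. ring.
  - intros; apply IH.
Qed.

Lemma expect_mono p q ps pi m s f g : 0 <= p <= 1 -> 0 <= q <= 1 -> 0 <= ps <= 1 ->
  (forall x, f x <= g x) -> expect p q ps pi m s f <= expect p q ps pi m s g.
Proof.
  intros Hp Hq Hs H; revert s; induction m as [|m IH]; intros s; [apply H|].
  rewrite !expect_S. unfold Pf. apply Fl_mono; [apply succ_nonneg; auto|]. intros; apply IH.
Qed.

Lemma Pf_000 p q ps du f : Pf p q ps (switching 0 du) f S000 =
  p*ps*f S110 + p*(1-ps)*f (S10 0) + (1-p)*f S000.
Proof. unfold Pf, Fl, succ, mk; simpl. ring. Qed.

Lemma Pf_110 p q ps du f : (1 <= du)%nat -> Pf p q ps (switching 0 du) f S110 =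
  q*f (S01 0) + (1-q)*f S110.
Proof. intros H. unfold Pf, Fl, succ, mk, switching; simpl.
  destruct du; [lia|]. simpl. ring. Qed.

Lemma Pf_10 p q ps du f n : Pf p q ps (switching 0 du) f (S10 n) =
  q*f S000 + (1-q)*ps*f S110 + (1-q)*(1-ps)*f (S10 (S n)).
Proof. unfold Pf, Fl, succ, mk; simpl. ring. Qed.

Lemma Pf_01t p q ps du f n : (du <= S n)%nat -> Pf p q ps (switching 0 du) f (S01 n) =
  p*f S110 + (1-p)*ps*f S000 + (1-p)*(1-ps)*f (S01 (S n)).
Proof. intros H. unfold Pf, Fl, succ, mk, switching; simpl.
  replace (Nat.leb du (S n)) with true by (symmetry; apply Nat.leb_le; exact H). simpl. ring. Qed.

Lemma Pf_01f p q ps du f n : (S n < du)%nat -> Pf p q ps (switching 0 du) f (S01 n) =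
  p*f S110 + (1-p)*f (S01 (S n)).
Proof. intros H. unfold Pf, Fl, succ, mk, switching; simpl.
  replace (Nat.leb du (S n)) with false by (symmetry; apply Nat.leb_gt; exact H). simpl. ring. Qed.

Lemma stage_Pf p q ps beta lambda du s :
  stage_cost p q ps beta lambda s (switching 0 du s) =
  Pf p q ps (switching 0 du) (cost beta) s + lambda * (if switching 0 du s then 1 else 0).
Proof. reflexivity. Qed.

Definition hfun p q ps beta lambda (du : nat) (G : R) (s : State) : R :=
  let pf := 1-ps in let pb := 1-p in let qb := 1-q in
  let al1 := beta*qb*pf/(1-qb*pf) in
  let al2 := (1-beta)*pb*pf/(1-pb*pf) in
  let a3 := (1-beta)*pb/p in
  let b3 := (pb*a3 + 2*(1-beta)*pb - G)/p in
  let h0 := (beta*p*pf + lambda - G + p*pf*(2*beta*qb*pf + lambda - G + qb*pf*al1)/(1-qb*pf))*(1-qb*pf)/(p*ps) in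
  let be1 := (2*beta*qb*pf + lambda - G + q*h0 + qb*pf*al1)/(1-qb*pf) in
  let be2 := (2*(1-beta)*pb*pf + lambda - G + pb*ps*h0 + pb*pf*al2)/(1-pb*pf) in
  match s with
  | S000 => h0
  | S110 => 0
  | S10 n => al1 * INR n + be1
  | S01 n => if Nat.leb du (S n) then al2 * INR n + be2
             else a3*INR n + b3 + pb^(du-1-n) * (al2*INR(du-1) + be2 - a3*INR(du-1) - b3)
  end.


Definition GamX p q ps beta lambda X Y :=
  let pf := 1 - ps in let pb := 1 - p in let qb := 1 - q in
  let a1 := p * pf / (1 - qb * pf) in
  let A := p / (qb * (1 - qb * pf)) in
  let B := q * X / (1 - pb * pf) in
  let b1 := q * (1 - X) / (1 - pb) + B in
  let D := (1 + a1) * pb * B + (1 + b1) * qb * A in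
  let n000 := pb * B / D in
  let n110 := qb * A / D in
  let psi := (1 - (pb + (1 - pb) * Y) * X) / (1 - pb) ^ 2
    + (pb * pf + (1 - pb * pf) * Y) * X / (1 - pb * pf) ^ 2 in
  beta * p * pf * n000 / (1 - qb * pf) ^ 2
            + (1 - beta) * q * psi * n110
            + lambda * ((1 + a1) * n000 + B * n110).

Lemma E110_alg p q ps beta lambda X Y :
  0 < p < 1 -> 0 < q < 1 -> 0 < ps <= 1 -> 0 <= X <= 1 ->
  forall G, G = GamX p q ps beta lambda X Y ->
  let pf := 1-ps in let pb := 1-p in let qb := 1-q in
  let al1 := beta*qb*pf/(1-qb*pf) in
  let al2 := (1-beta)*pb*pf/(1-pb*pf) in
  let a3 := (1-beta)*pb/p in
  let b3 := (pb*a3 + 2*(1-beta)*pb - G)/p in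
  let h0 := (beta*p*pf + lambda - G + p*pf*(2*beta*qb*pf + lambda - G + qb*pf*al1)/(1-qb*pf))*(1-qb*pf)/(p*ps) in
  let be2 := (2*(1-beta)*pb*pf + lambda - G + pb*ps*h0 + pb*pf*al2)/(1-pb*pf) in
  let w0 := b3 + X*(al2*(Y-1) + be2 - a3*(Y-1) - b3) in
  (1-beta)*q*1 = G + 0 - (q*w0 + (1-q)*0).
Proof.
  intros Hp Hq Hs HX G HG. intros. subst G pf pb qb al1 al2 a3 b3 h0 be2 w0. unfold GamX. cbv zeta.
  assert (0 <= 1 - ps) by lra. assert (0 < 1-p) by lra. assert (0 < 1-q) by lra.
  assert (0 <= (1 - p) * (1 - ps)) by (apply Rmult_le_pos; lra).
  assert ((1 - p) * (1 - ps) < 1) by (assert ((1 - p) * (1 - ps) <= (1-p)*1) by (apply Rmult_le_compat_l; lra); lra).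
  assert (0 <= (1 - q) * (1 - ps)) by (apply Rmult_le_pos; lra).
  assert ((1 - q) * (1 - ps) < 1) by (assert ((1 - q) * (1 - ps) <= (1-q)*1) by (apply Rmult_le_compat_l; lra); lra).
  field. repeat split; try lra.
  apply Rgt_not_eq. apply Rplus_le_lt_0_compat.
  - repeat apply Rmult_le_pos; try lra. assert (0 <= p * (1 - ps)) by (apply Rmult_le_pos; lra). lra.
  - apply Rmult_lt_0_compat; [|lra]. 
    assert (0 < (1 - (1 - p)) * (1 - (1 - p) * (1 - ps))) by (apply Rmult_lt_0_compat; lra).
    assert (0 <= q * (1 - X) * (1 - (1 - p) * (1 - ps))) by (repeat apply Rmult_le_pos; lra).
    assert (0 <= q * X * (1 - (1 - p))) by (repeat apply Rmult_le_pos; lra). lra.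
Qed.

Lemma poisson_000 p q ps beta lambda du G :
  p <> 0 -> ps <> 0 -> 1 - (1-q)*(1-ps) <> 0 ->
  stage_cost p q ps beta lambda S000 (switching 0 du S000) =
  G + hfun p q ps beta lambda du G S000 - Pf p q ps (switching 0 du) (hfun p q ps beta lambda du G) S000.
Proof.
  intros. rewrite stage_Pf, !Pf_000. cbv beta zeta iota delta [hfun cost switching]. simpl Nat.eqb. cbv iota.
  rewrite !S_INR. simpl INR. field. auto.
Qed.

Lemma poisson_10 p q ps beta lambda du G n :
  p <> 0 -> ps <> 0 -> 1 - (1-q)*(1-ps) <> 0 ->
  stage_cost p q ps beta lambda (S10 n) (switching 0 du (S10 n)) =
  G + hfun p q ps beta lambda du G (S10 n) - Pf p q ps (switching 0 du) (hfun p q ps beta lambda du G) (S10 n).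
Proof.
  intros. rewrite stage_Pf, !Pf_10. cbv beta zeta iota delta [hfun cost switching]. simpl Nat.leb. cbv iota.
  rewrite !S_INR. field. auto.
Qed.

Lemma poisson_01t p q ps beta lambda du G n :
  p <> 0 -> ps <> 0 -> 1 - (1-q)*(1-ps) <> 0 -> 1 - (1-p)*(1-ps) <> 0 -> (du <= S n)%nat ->
  stage_cost p q ps beta lambda (S01 n) (switching 0 du (S01 n)) =
  G + hfun p q ps beta lambda du G (S01 n) - Pf p q ps (switching 0 du) (hfun p q ps beta lambda du G) (S01 n).
Proof.
  intros. rewrite stage_Pf, !Pf_01t by auto. cbv beta zeta iota delta [hfun cost switching].
  replace (Nat.leb du (S n)) with true by (symmetry; apply Nat.leb_le; lia).
  replace (Nat.leb du (S (S n))) with true by (symmetry; apply Nat.leb_le; lia).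
  rewrite !S_INR. field. auto.
Qed.

Lemma poisson_01f p q ps beta lambda du G n :
  p <> 0 -> ps <> 0 -> 1 - (1-q)*(1-ps) <> 0 -> 1 - (1-p)*(1-ps) <> 0 -> (S n < du)%nat ->
  stage_cost p q ps beta lambda (S01 n) (switching 0 du (S01 n)) =
  G + hfun p q ps beta lambda du G (S01 n) - Pf p q ps (switching 0 du) (hfun p q ps beta lambda du G) (S01 n).
Proof.
  intros. rewrite stage_Pf, !Pf_01f by auto. cbv beta zeta iota delta [hfun cost switching].
  replace (Nat.leb du (S n)) with false by (symmetry; apply Nat.leb_gt; lia).
  replace (du - 1 - n)%nat with (S (du - 1 - S n)) by lia. rewrite <- tech_pow_Rmult.
  destruct (Nat.leb du (S (S n))) eqn:E.
  - apply Nat.leb_le in E. replace (du - 1 - S n)%nat with 0%nat by lia.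
    replace (du - 1)%nat with (S n) by lia.
    rewrite !S_INR. simpl pow. field. auto.
  - rewrite !S_INR. field. auto.
Qed.

Definition Gm p q ps beta lambda du := GamX p q ps beta lambda ((1-p)^(du-1)) (INR du).

Lemma pow_le1 x n : 0 <= x <= 1 -> 0 <= x ^ n <= 1.
Proof. intros H. split. apply pow_le; lra. rewrite <- (pow1 n). apply pow_incr; lra. Qed.

Lemma poisson_110 p q ps beta lambda du :
  0 < p < 1 -> 0 < q < 1 -> 0 < ps <= 1 -> (1 <= du)%nat ->
  stage_cost p q ps beta lambda S110 (switching 0 du S110) =
  Gm p q ps beta lambda du + hfun p q ps beta lambda du (Gm p q ps beta lambda du) S110
  - Pf p q ps (switching 0 du) (hfun p q ps beta lambda du (Gm p q ps beta lambda du)) S110.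
Proof.
  intros Hp Hq Hs Hdu.
  assert (HX : 0 <= (1-p)^(du-1) <= 1) by (apply pow_le1; lra).
  pose proof (E110_alg p q ps beta lambda ((1-p)^(du-1)) (INR du) Hp Hq Hs HX
     (Gm p q ps beta lambda du) eq_refl) as E.
  cbv zeta in E.
  rewrite stage_Pf, !Pf_110 by auto.
  set (G := Gm p q ps beta lambda du) in *.
  cbv beta zeta iota delta [hfun cost switching].
  replace (Nat.eqb du 0) with false by (destruct du; [lia|reflexivity]).
  rewrite minus_INR by lia. simpl INR.
  destruct (Nat.leb du 1) eqn:E1.
  - apply Nat.leb_le in E1. replace du with 1%nat in * by lia. simpl in E. simpl pow. simpl INR in *.
    transitivity ((1-beta)*q*1); [ring|]. rewrite E. ring.
  - rewrite Nat.sub_0_r. transitivity ((1-beta)*q*1); [ring|]. rewrite E. ring.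
Qed.

Lemma poisson p q ps beta lambda du s :
  0 < p < 1 -> 0 < q < 1 -> 0 < ps <= 1 -> (1 <= du)%nat ->
  stage_cost p q ps beta lambda s (switching 0 du s) =
  Gm p q ps beta lambda du + hfun p q ps beta lambda du (Gm p q ps beta lambda du) s
  - Pf p q ps (switching 0 du) (hfun p q ps beta lambda du (Gm p q ps beta lambda du)) s.
Proof.
  intros Hp Hq Hs Hdu.
  assert (p <> 0) by lra. assert (ps <> 0) by lra.
  assert (0 <= (1 - p) * (1 - ps) < 1).
  { split. apply Rmult_le_pos; lra. assert ((1 - p) * (1 - ps) <= (1-p)*1) by (apply Rmult_le_compat_l; lra); lra. }
  assert (0 <= (1 - q) * (1 - ps) < 1).
  { split. apply Rmult_le_pos; lra. assert ((1 - q) * (1 - ps) <= (1-q)*1) by (apply Rmult_le_compat_l; lra); lra. }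
  destruct s as [| |n|n].
  - apply poisson_000; auto; lra.
  - apply poisson_110; auto.
  - apply poisson_10; auto; lra.
  - destruct (Compare_dec.le_lt_dec du (S n)).
    + apply poisson_01t; auto; lra.
    + apply poisson_01f; auto; lra.
Qed.

Definition Vf (s : State) : R := INR (sage s) + 1.

Lemma lin_bound a b n : Rabs (a * INR n + b) <= (Rabs a + Rabs b) * (INR n + 2).
Proof.
  pose proof (pos_INR n). pose proof (Rabs_pos a). pose proof (Rabs_pos b).
  eapply Rle_trans. apply Rabs_triang. rewrite Rabs_mult, (Rabs_right (INR n)) by lra. nra.
Qed.

Lemma fin_bound a b x k z n : 0 <= x <= 1 ->
  Rabs (a * INR n + b + x ^ k * z) <= (Rabs a + Rabs b + Rabs z) * (INR n + 2).
Proof.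
  intros Hx. pose proof (pos_INR n). pose proof (Rabs_pos z).
  pose proof (pow_le1 x k Hx).
  eapply Rle_trans. apply Rabs_triang. 
  assert (Rabs (x ^ k * z) <= Rabs z).
  { rewrite Rabs_mult, (Rabs_right (x^k)) by lra. nra. }
  pose proof (lin_bound a b n). nra.
Qed.

Lemma shape_bound (h : State -> R) a1 b1 a2 b2 a3 b3 z h0 x du :
  0 <= x <= 1 -> h S000 = h0 -> h S110 = 0 ->
  (forall n, h (S10 n) = a1 * INR n + b1) ->
  (forall n, h (S01 n) = if Nat.leb du (S n) then a2 * INR n + b2
                         else a3 * INR n + b3 + x ^ (du - 1 - n) * z) ->
  exists C, 0 <= C /\ forall s, Rabs (h s) <= C * Vf s.
Proof.
  intros Hx H0 H1 H10 H01.
  set (C := Rabs h0 + (Rabs a1 + Rabs b1) + (Rabs a2 + Rabs b2) + (Rabs a3 + Rabs b3 + Rabs z)).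
  pose proof (Rabs_pos h0). pose proof (Rabs_pos a1). pose proof (Rabs_pos b1).
  pose proof (Rabs_pos a2). pose proof (Rabs_pos b2). pose proof (Rabs_pos a3).
  pose proof (Rabs_pos b3). pose proof (Rabs_pos z).
  exists C. split; [unfold C; lra|]. intros s. unfold Vf.
  destruct s as [| |n|n]; simpl sage.
  - rewrite H0. simpl INR. unfold C; lra.
  - rewrite H1, Rabs_R0. simpl INR. unfold C; lra.
  - rewrite H10. rewrite S_INR. pose proof (pos_INR n). eapply Rle_trans; [apply lin_bound|].
    replace (INR n + 1 + 1) with (INR n + 2) by ring. apply Rmult_le_compat_r; [lra|]. unfold C; lra.
  - rewrite H01. rewrite S_INR. pose proof (pos_INR n).
    replace (INR n + 1 + 1) with (INR n + 2) by ring.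
    destruct (Nat.leb du (S n)).
    + eapply Rle_trans; [apply lin_bound|]. apply Rmult_le_compat_r; [lra|]. unfold C; lra.
    + eapply Rle_trans; [apply fin_bound; exact Hx|]. apply Rmult_le_compat_r; [lra|]. unfold C; lra.
Qed.

Lemma h_bound p q ps beta lambda du G : 0 < p < 1 ->
  exists C, 0 <= C /\ forall s, Rabs (hfun p q ps beta lambda du G s) <= C * Vf s.
Proof.
  intros Hp.
  eapply (shape_bound _ _ _ _ _ _ _ _ _ (1-p) du).
  - lra.
  - reflexivity.
  - reflexivity.
  - intros n. cbv beta zeta iota delta [hfun]. reflexivity.
  - intros n. cbv beta zeta iota delta [hfun]. reflexivity.
Qed.

Lemma drift p q ps du s : 0 < p < 1 -> 0 < q < 1 -> 0 < ps <= 1 -> (1 <= du)%nat ->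
  Pf p q ps (switching 0 du) Vf s <= Rmax (1-p) (1-q) * Vf s + 2.
Proof.
  intros Hp Hq Hs Hdu.
  pose proof (Rmax_l (1-p) (1-q)). pose proof (Rmax_r (1-p) (1-q)).
  set (r := Rmax (1-p) (1-q)) in *.
  assert (0 <= 1 - ps) by lra.
  destruct s as [| |n|n].
  - rewrite Pf_000. unfold Vf; simpl sage; simpl INR.
    assert (0 <= r) by lra. assert (p * (1-ps) <= 1) by (assert (p*(1-ps) <= 1 * 1) by (apply Rmult_le_compat; lra); lra). nra.
  - rewrite Pf_110 by auto. unfold Vf; simpl sage; simpl INR. assert (0 <= r) by lra. nra.
  - rewrite Pf_10. unfold Vf; simpl sage. rewrite !S_INR. pose proof (pos_INR n).
    assert ((1-q)*(1-ps)*(INR n + 2) <= r * (INR n + 2)).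
    { apply Rmult_le_compat_r; [lra|]. assert ((1-q)*(1-ps) <= (1-q)*1) by (apply Rmult_le_compat_l; lra). lra. }
    match goal with |- ?L <= _ => replace L with (1 + (1-q)*(1-ps)*(INR n + 2)) by (simpl; ring) end. lra.
  - pose proof (pos_INR n). destruct (Compare_dec.le_lt_dec du (S n)).
    + rewrite Pf_01t by auto. unfold Vf; simpl sage. rewrite !S_INR.
      assert ((1-p)*(1-ps)*(INR n + 2) <= r * (INR n + 2)).
      { apply Rmult_le_compat_r; [lra|]. assert ((1-p)*(1-ps) <= (1-p)*1) by (apply Rmult_le_compat_l; lra). lra. }
      match goal with |- ?L <= _ => replace L with (1 + (1-p)*(1-ps)*(INR n + 2)) by (simpl; ring) end. lra.
    + rewrite Pf_01f by auto. unfold Vf; simpl sage. rewrite !S_INR.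
      assert ((1-p)*(INR n + 2) <= r * (INR n + 2)) by (apply Rmult_le_compat_r; lra).
      match goal with |- ?L <= _ => replace L with (1 + (1-p)*(INR n + 2)) by (simpl; ring) end. lra.
Qed.

Lemma expect_V_bound p q ps du k : 0 < p < 1 -> 0 < q < 1 -> 0 < ps <= 1 -> (1 <= du)%nat ->
  expect p q ps (switching 0 du) k S000 Vf <= 2 / (1 - Rmax (1-p) (1-q)).
Proof.
  intros Hp Hq Hs Hdu.
  assert (Hr : Rmax (1-p) (1-q) < 1) by (apply Rmax_lub_lt; lra).
  assert (Hr0 : 0 <= Rmax (1-p) (1-q)) by (pose proof (Rmax_l (1-p) (1-q)); lra).
  set (r := Rmax (1-p) (1-q)) in *.
  assert (HM : 2 / (1 - r) * (1 - r) = 2) by (field; lra).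
  assert (HM1 : 2 <= 2 / (1 - r)).
  { apply (Rmult_le_reg_r (1 - r)); [lra|]. rewrite HM. nra. }
  induction k as [|k IH].
  - simpl. unfold Vf. simpl. lra.
  - rewrite expect_comm.
    eapply Rle_trans.
    { apply (expect_mono _ _ _ _ _ _ _ (fun x => r * Vf x + 0 * Vf x + 2)); try lra.
      intros x. pose proof (drift p q ps du x Hp Hq Hs Hdu). fold r in H. lra. }
    rewrite expect_lin. nra.
Qed.

Lemma expect_h_bound p q ps du k (h : State -> R) C :
  0 < p < 1 -> 0 < q < 1 -> 0 < ps <= 1 -> (1 <= du)%nat ->
  0 <= C -> (forall s, Rabs (h s) <= C * Vf s) ->
  Rabs (expect p q ps (switching 0 du) k S000 h) <= C * (2 / (1 - Rmax (1-p) (1-q))).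
Proof.
  intros Hp Hq Hs Hdu HC Hh.
  pose proof (expect_V_bound p q ps du k Hp Hq Hs Hdu) as HV.
  assert (E1 : expect p q ps (switching 0 du) k S000 h <= expect p q ps (switching 0 du) k S000 (fun x => C * Vf x + 0 * Vf x + 0)).
  { apply expect_mono; try lra. intros x. specialize (Hh x). apply Rabs_le_between in Hh; lra. }
  assert (E2 : expect p q ps (switching 0 du) k S000 (fun x => (-C) * Vf x + 0 * Vf x + 0) <= expect p q ps (switching 0 du) k S000 h).
  { apply expect_mono; try lra. intros x. specialize (Hh x). apply Rabs_le_between in Hh; lra. }
  rewrite expect_lin in E1, E2.
  apply Rabs_le_between. split; nra.
Qed.

Lemma cost_limit p q ps beta lambda du :
  0 < p < 1 -> 0 < q < 1 -> 0 < ps <= 1 -> (1 <= du)%nat ->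
  avg_cost p q ps beta lambda (switching 0 du) = Finite (Gm p q ps beta lambda du).
Proof.
  intros Hp Hq Hs Hdu.
  set (G := Gm p q ps beta lambda du).
  set (h := hfun p q ps beta lambda du G).
  set (pi := switching 0 du).
  set (E := fun k => expect p q ps pi k S000 h).
  assert (Hdec : forall k, expect p q ps pi k S000 (fun s => stage_cost p q ps beta lambda s (pi s))
                          = G + E k - E (S k)).
  { intros k. rewrite (expect_ext _ _ _ _ _ _ _ (fun x => 1 * h x + (-1) * Pf p q ps pi h x + G)).
    - rewrite expect_lin. unfold E. rewrite (expect_comm _ _ _ _ k). ring.
    - intros x. unfold pi, h, G. rewrite poisson by auto. ring. }
  assert (Hsum : forall T, sum_f_R0 (fun k => expect p q ps pi k S000 (fun s => stage_cost p q ps beta lambda s (pi s))) T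
                          = INR (S T) * G + h S000 - E (S T)).
  { induction T as [|T IH].
    - cbn [sum_f_R0]. rewrite Hdec. unfold E. cbn [expect]. simpl INR. ring.
    - cbn [sum_f_R0]. rewrite IH, Hdec. rewrite (S_INR (S T)). ring. }
  destruct (h_bound p q ps beta lambda du G Hp) as [C [HC Hh]].
  set (K := Rabs (h S000) + C * (2 / (1 - Rmax (1-p) (1-q)))).
  assert (HE : forall k, Rabs (E k) <= C * (2 / (1 - Rmax (1-p) (1-q)))).
  { intros k. unfold E. apply expect_h_bound; auto. }
  unfold avg_cost. fold pi.
  apply is_LimSup_seq_unique. apply is_lim_LimSup_seq.
  assert (Hinv : is_lim_seq (fun n => / INR (S n)) 0).
  { assert (H0 : is_lim_seq (fun n => / INR n) (Rbar_inv p_infty)).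
    { apply is_lim_seq_inv. apply is_lim_seq_INR. discriminate. }
    simpl in H0. apply is_lim_seq_incr_1 in H0. exact H0. }
  apply is_lim_seq_le_le with (u := fun n => G + (- K) * / INR (S n)) (w := fun n => G + K * / INR (S n)).
  - intros n. rewrite Hsum.
    assert (HP : 0 < INR (S n)) by (apply lt_0_INR; lia).
    assert (Hq' : / INR (S n) * (INR (S n) * G + h S000 - E (S n)) = G + (h S000 - E (S n)) * / INR (S n)) by (field; lra).
    rewrite Hq'.
    assert (Hb : Rabs (h S000 - E (S n)) <= K).
    { unfold K. eapply Rle_trans. apply Rabs_triang. rewrite Rabs_Ropp. specialize (HE (S n)). lra. }
    apply Rabs_le_between in Hb.
    assert (0 < / INR (S n)) by (apply Rinv_0_lt_compat; lra).
    split; nra.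
  - pose proof (is_lim_seq_scal_l _ (-K) _ Hinv) as H1. simpl in H1.
    rewrite Rmult_0_r in H1.
    pose proof (is_lim_seq_plus' _ _ _ _ (is_lim_seq_const G) H1) as H2.
    rewrite Rplus_0_r in H2. exact H2.
  - pose proof (is_lim_seq_scal_l _ K _ Hinv) as H1. simpl in H1.
    rewrite Rmult_0_r in H1.
    pose proof (is_lim_seq_plus' _ _ _ _ (is_lim_seq_const G) H1) as H2.
    rewrite Rplus_0_r in H2. exact H2.
Qed.

Definition ind (s' : State) (x : State) : R := if state_eq_dec x s' then 1 else 0.

Definition state_eqb (x y : State) : bool :=
  match x, y with
  | S000, S000 => true | S110, S110 => true
  | S10 a, S10 b => Nat.eqb a b | S01 a, S01 b => Nat.eqb a b
  | _, _ => false end.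

Lemma state_eqb_spec x y : state_eqb x y = true <-> x = y.
Proof.
  destruct x, y; simpl; split; intros H; try discriminate; try reflexivity;
  try (apply Nat.eqb_eq in H; subst; reflexivity);
  try (injection H as H; subst; apply Nat.eqb_refl).
Qed.

Lemma ind_eqb s' x : ind s' x = if state_eqb x s' then 1 else 0.
Proof.
  unfold ind. destruct (state_eq_dec x s') as [E|E].
  - subst. replace (state_eqb s' s') with true; [reflexivity|]. symmetry; apply state_eqb_spec; reflexivity.
  - destruct (state_eqb x s') eqn:F; [apply state_eqb_spec in F; contradiction|reflexivity].
Qed.

Lemma trans_Pf p q ps pi s s' :
  trans p q ps (pi s) s s' = Pf p q ps pi (ind s') s.
Proof.
  unfold trans, Pf, Fl. induction (succ p q ps (pi s) s) as [|[x r] l IH]; simpl; [reflexivity|].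
  rewrite IH. unfold ind. destruct (state_eq_dec x s'); ring.
Qed.

Definition tv p q ps (du : nat) (s s' : State) : R :=
  match s, s' with
  | S000, S000 => 1-p | S000, S110 => p*ps
  | S000, S10 m => if Nat.eqb 0 m then p*(1-ps) else 0 | S000, S01 _ => 0
  | S110, S000 => 0 | S110, S110 => 1-q | S110, S10 _ => 0
  | S110, S01 m => if Nat.eqb 0 m then q else 0
  | S10 n, S000 => q | S10 n, S110 => (1-q)*ps
  | S10 n, S10 m => if Nat.eqb (S n) m then (1-q)*(1-ps) else 0 | S10 n, S01 _ => 0
  | S01 n, S000 => if Nat.leb du (S n) then (1-p)*ps else 0 | S01 n, S110 => p
  | S01 n, S10 _ => 0
  | S01 n, S01 m => if Nat.eqb (S n) m then (if Nat.leb du (S n) then (1-p)*(1-ps) else 1-p) else 0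
  end.

Lemma trans_tv p q ps du s s' : (1 <= du)%nat ->
  trans p q ps (switching 0 du s) s s' = tv p q ps du s s'.
Proof.
  intros Hdu. rewrite (trans_Pf p q ps (switching 0 du)).
  destruct s as [| |n|n].
  - rewrite Pf_000. rewrite !ind_eqb. destruct s'; cbn [state_eqb]; unfold tv;
    try (destruct (Nat.eqb 0 _)); ring.
  - rewrite Pf_110 by auto. rewrite !ind_eqb. destruct s'; cbn [state_eqb]; unfold tv;
    try (destruct (Nat.eqb 0 _)); ring.
  - rewrite Pf_10. rewrite !ind_eqb. destruct s'; cbn [state_eqb]; unfold tv;
    try (destruct (Nat.eqb _ _)); ring.
  - destruct (Compare_dec.le_lt_dec du (S n)) as [H|H].
    + rewrite Pf_01t by auto. rewrite !ind_eqb.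
      assert (E : Nat.leb du (S n) = true) by (apply Nat.leb_le; exact H).
      destruct s'; cbn [state_eqb]; unfold tv; rewrite ?E;
      try (destruct (Nat.eqb _ _)); ring.
    + rewrite Pf_01f by auto. rewrite !ind_eqb.
      assert (E : Nat.leb du (S n) = false) by (apply Nat.leb_gt; exact H).
      destruct s'; cbn [state_eqb]; unfold tv; rewrite ?E;
      try (destruct (Nat.eqb _ _)); ring.
Qed.

Fixpoint fsum (a : nat -> R) (m : nat) : R :=
  match m with 0%nat => 0 | S m => fsum a m + a m end.

Lemma fsum_shift1 a m : fsum a (S m) = a 0%nat + fsum (fun k => a (S k)) m.
Proof. induction m as [|m IH]; simpl in *; [ring|]. rewrite IH. ring. Qed.

Lemma series_shift a m l : is_series (fun k => a (m + k)%nat) l -> is_series a (l + fsum a m).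
Proof.
  revert a l; induction m as [|m IH]; intros a l H.
  - simpl. rewrite Rplus_0_r. exact H.
  - apply is_series_decr_1.
    specialize (IH (fun j => a (S j)) l H).
    match goal with |- is_series _ ?L => replace L with (l + fsum (fun j => a (S j)) m) end.
    + exact IH.
    + rewrite fsum_shift1. unfold plus, opp; simpl. unfold Rminus. ring.
Qed.

Lemma geom_c c x : 0 <= x < 1 -> is_series (fun n => c * x ^ n) (c / (1 - x)).
Proof.
  intros Hx. assert (H : Rabs x < 1) by (rewrite Rabs_right; lra).
  pose proof (is_series_scal_r c _ _ (is_series_geom x H)) as H2.
  replace (c / (1 - x)) with (/ (1 - x) * c) by (field; lra).
  apply (is_series_ext _ _ _ (fun n => Rmult_comm _ _)) in H2. exact H2.
Qed.

Lemma series_zero : is_series (fun _ : nat => 0) 0.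
Proof.
  assert (H : is_series (fun n => 0 * (1/2)^n) (0 / (1 - 1/2))) by (apply geom_c; lra).
  assert (E : 0 / (1 - 1/2) = 0) by (unfold Rdiv; ring). rewrite E in H.
  apply (is_series_ext (fun n => 0 * (1/2)^n)); [intros n; apply Rmult_0_l|]. exact H.
Qed.

Lemma fsum_zero a m : (forall k, (k < m)%nat -> a k = 0) -> fsum a m = 0.
Proof.
  induction m as [|m IH]; intros H; simpl; [reflexivity|].
  rewrite IH by (intros; apply H; lia). rewrite H by lia. ring.
Qed.

Lemma series_single a k : (forall n, n <> k -> a n = 0) -> is_series a (a k).
Proof.
  intros H.
  assert (Hs : is_series (fun j => a (S k + j)%nat) 0).
  { apply (is_series_ext (fun _ => 0)); [intros n; symmetry; apply H; lia|apply series_zero]. }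
  apply series_shift in Hs.
  replace (fsum a (S k)) with (a k) in Hs.
  - rewrite Rplus_0_l in Hs. exact Hs.
  - simpl. rewrite fsum_zero by (intros; apply H; lia). ring.
Qed.

Lemma series_zero' a : (forall n, a n = 0) -> is_series a 0.
Proof. intros H. apply (is_series_ext (fun _ => 0)); [intros n; symmetry; apply H|apply series_zero]. Qed.

Definition rseq p q ps (n : nat) : R := p*(1-ps)*((1-q)*(1-ps))^n.
Definition sseq p q ps (du n : nat) : R :=
  if Nat.leb du (S n) then q*(1-p)^(du-1)*((1-p)*(1-ps))^(S n - du) else q*(1-p)^n.
Definition tseq p q ps (du n : nat) : R :=
  if Nat.leb du (S n) then sseq p q ps du n else 0.

Lemma rseq_series p q ps : 0 < q < 1 -> 0 < ps <= 1 ->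
  is_series (rseq p q ps) (p*(1-ps)/(1-(1-q)*(1-ps))).
Proof.
  intros Hq Hs. apply geom_c. split. apply Rmult_le_pos; lra.
  assert ((1 - q) * (1 - ps) <= (1-q)*1) by (apply Rmult_le_compat_l; lra). lra.
Qed.

Lemma tseq_tail p q ps du k : (1 <= du)%nat ->
  tseq p q ps du (du - 1 + k) = q*(1-p)^(du-1)*((1-p)*(1-ps))^k.
Proof.
  intros Hdu. unfold tseq, sseq.
  replace (Nat.leb du (S (du - 1 + k))) with true by (symmetry; apply Nat.leb_le; lia).
  f_equal. f_equal. lia.
Qed.

Lemma sseq_tail p q ps du k : (1 <= du)%nat ->
  sseq p q ps du (du - 1 + k) = q*(1-p)^(du-1)*((1-p)*(1-ps))^k.
Proof.
  intros Hdu. unfold sseq.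
  replace (Nat.leb du (S (du - 1 + k))) with true by (symmetry; apply Nat.leb_le; lia).
  f_equal. f_equal. lia.
Qed.

Lemma tseq_series p q ps du : 0 < p < 1 -> 0 < ps <= 1 -> (1 <= du)%nat ->
  is_series (tseq p q ps du) (q*(1-p)^(du-1)/(1-(1-p)*(1-ps))).
Proof.
  intros Hp Hs Hdu.
  assert (Hg : is_series (fun k => tseq p q ps du (du - 1 + k)) (q*(1-p)^(du-1)/(1-(1-p)*(1-ps)))).
  { apply (is_series_ext (fun k => q*(1-p)^(du-1)*((1-p)*(1-ps))^k)).
    - intros k; symmetry; apply tseq_tail; auto.
    - apply geom_c. split. apply Rmult_le_pos; lra.
      assert ((1 - p) * (1 - ps) <= (1-p)*1) by (apply Rmult_le_compat_l; lra). lra. }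
  apply series_shift in Hg. rewrite fsum_zero in Hg.
  - rewrite Rplus_0_r in Hg. exact Hg.
  - intros k Hk. unfold tseq. replace (Nat.leb du (S k)) with false by (symmetry; apply Nat.leb_gt; lia). reflexivity.
Qed.

Lemma fsum_sseq p q ps du j : 0 < p -> (j <= du - 1)%nat ->
  fsum (sseq p q ps du) j = q*(1-(1-p)^j)/(1-(1-p)).
Proof.
  intros Hp. induction j as [|j IH]; intros Hj.
  - simpl. field. lra.
  - simpl fsum. rewrite IH by lia. unfold sseq.
    replace (Nat.leb du (S j)) with false by (symmetry; apply Nat.leb_gt; lia).
    simpl pow. field. lra.
Qed.

Lemma sseq_series p q ps du : 0 < p < 1 -> 0 < ps <= 1 -> (1 <= du)%nat ->
  is_series (sseq p q ps du)
    (q*(1-(1-p)^(du-1))/(1-(1-p)) + q*(1-p)^(du-1)/(1-(1-p)*(1-ps))).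
Proof.
  intros Hp Hs Hdu.
  assert (Hg : is_series (fun k => sseq p q ps du (du - 1 + k)) (q*(1-p)^(du-1)/(1-(1-p)*(1-ps)))).
  { apply (is_series_ext (fun k => q*(1-p)^(du-1)*((1-p)*(1-ps))^k)).
    - intros k; symmetry; apply sseq_tail; auto.
    - apply geom_c. split. apply Rmult_le_pos; lra.
      assert ((1 - p) * (1 - ps) <= (1-p)*1) by (apply Rmult_le_compat_l; lra). lra. }
  apply series_shift in Hg. rewrite fsum_sseq in Hg by (lra || lia).
  rewrite Rplus_comm. exact Hg.
Qed.

Definition a1d p q ps := p*(1-ps)/(1-(1-q)*(1-ps)).
Definition Ad p q ps := p/((1-q)*(1-(1-q)*(1-ps))).
Definition Bd p q ps (du : nat) := q*(1-p)^(du-1)/(1-(1-p)*(1-ps)).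
Definition b1d p q ps du := q*(1-(1-p)^(du-1))/(1-(1-p)) + Bd p q ps du.
Definition Dd p q ps du := (1 + a1d p q ps)*(1-p)*Bd p q ps du + (1 + b1d p q ps du)*(1-q)*Ad p q ps.
Definition N0 p q ps du := (1-p)*Bd p q ps du / Dd p q ps du.
Definition N1 p q ps du := (1-q)*Ad p q ps / Dd p q ps du.

Lemma basic_facts p q ps : 0 < p < 1 -> 0 < q < 1 -> 0 < ps <= 1 ->
  0 <= (1-p)*(1-ps) < 1 /\ 0 <= (1-q)*(1-ps) < 1.
Proof.
  intros. split; split; try (apply Rmult_le_pos; lra).
  - assert ((1 - p) * (1 - ps) <= (1-p)*1) by (apply Rmult_le_compat_l; lra). lra.
  - assert ((1 - q) * (1 - ps) <= (1-q)*1) by (apply Rmult_le_compat_l; lra). lra.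
Qed.

Lemma div_nonneg a b : 0 <= a -> 0 < b -> 0 <= a / b.
Proof. intros. unfold Rdiv. apply Rmult_le_pos; [lra|]. left; apply Rinv_0_lt_compat; lra. Qed.
Lemma div_pos a b : 0 < a -> 0 < b -> 0 < a / b.
Proof. intros. unfold Rdiv. apply Rmult_lt_0_compat; [lra|]. apply Rinv_0_lt_compat; lra. Qed.

Lemma consts_pos p q ps du : 0 < p < 1 -> 0 < q < 1 -> 0 < ps <= 1 ->
  0 <= a1d p q ps /\ 0 < Ad p q ps /\ 0 <= Bd p q ps du /\ 0 <= b1d p q ps du /\
  0 < Dd p q ps du /\ 0 <= N0 p q ps du /\ 0 < N1 p q ps du.
Proof.
  intros Hp Hq Hs. destruct (basic_facts p q ps Hp Hq Hs) as [F1 F2].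
  assert (HX : 0 <= (1-p)^(du-1) <= 1) by (apply pow_le1; lra).
  assert (Ha : 0 <= a1d p q ps) by (unfold a1d; apply div_nonneg; [apply Rmult_le_pos|]; lra).
  assert (HA : 0 < Ad p q ps) by (unfold Ad; apply div_pos; [lra|apply Rmult_lt_0_compat; lra]).
  assert (HB : 0 <= Bd p q ps du) by (unfold Bd; apply div_nonneg; [apply Rmult_le_pos|]; lra).
  assert (Hb : 0 <= b1d p q ps du).
  { unfold b1d. assert (0 <= q * (1 - (1 - p) ^ (du - 1)) / (1 - (1 - p))) by (apply div_nonneg; [apply Rmult_le_pos|]; lra). lra. }
  assert (HD : 0 < Dd p q ps du).
  { unfold Dd. assert (0 <= (1 + a1d p q ps) * (1 - p) * Bd p q ps du) by (apply Rmult_le_pos; [apply Rmult_le_pos|]; lra).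
    assert (0 < (1 + b1d p q ps du) * (1 - q) * Ad p q ps) by (apply Rmult_lt_0_compat; [apply Rmult_lt_0_compat|]; lra). lra. }
  repeat split; auto.
  - unfold N0. apply div_nonneg; [apply Rmult_le_pos|]; lra.
  - unfold N1. apply div_pos; [apply Rmult_lt_0_compat|]; lra.
Qed.

(* balance identities for the unnormalised solution *)
Lemma bal_Z p q ps du : 0 < p < 1 -> 0 < q < 1 -> 0 < ps <= 1 ->
  (1-p)*Bd p q ps du = (1-p)*Bd p q ps du*(1-p) + a1d p q ps * ((1-p)*Bd p q ps du) * q
    + Bd p q ps du * ((1-q)*Ad p q ps) * (1-p) * ps.
Proof.
  intros Hp Hq Hs. destruct (basic_facts p q ps Hp Hq Hs) as [F1 F2].
  unfold a1d, Ad, Bd. field. repeat split; lra.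
Qed.

Lemma bal_O p q ps du : 0 < p < 1 -> 0 < q < 1 -> 0 < ps <= 1 ->
  (1-q)*Ad p q ps = (1-p)*Bd p q ps du*(p*ps) + (1-q)*Ad p q ps*(1-q)
    + a1d p q ps * ((1-p)*Bd p q ps du) * ((1-q)*ps) + b1d p q ps du * ((1-q)*Ad p q ps) * p.
Proof.
  intros Hp Hq Hs. destruct (basic_facts p q ps Hp Hq Hs) as [F1 F2].
  unfold b1d, a1d, Ad, Bd. field. repeat split; lra.
Qed.

Lemma norm_id p q ps du : 0 < p < 1 -> 0 < q < 1 -> 0 < ps <= 1 ->
  N0 p q ps du + N1 p q ps du + a1d p q ps * N0 p q ps du + b1d p q ps du * N1 p q ps du = 1.
Proof.
  intros Hp Hq Hs. destruct (consts_pos p q ps du Hp Hq Hs) as (_&_&_&_&HD&_).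
  unfold N0, N1, Rdiv. transitivity (Dd p q ps du * / Dd p q ps du).
  - unfold Dd. ring.
  - apply Rinv_r. lra.
Qed.

Lemma sum_state_ext f g l : (forall s, f s = g s) -> sum_state f l -> sum_state g l.
Proof.
  intros H [a [b [Ha [Hb E]]]]. exists a, b. split; [|split].
  - apply (is_series_ext _ _ _ (fun n => H (S10 n))) in Ha. exact Ha.
  - apply (is_series_ext _ _ _ (fun n => H (S01 n))) in Hb. exact Hb.
  - rewrite E, !H. reflexivity.
Qed.

Lemma sum_state_eq f l a b : sum_state f l ->
  is_series (fun n => f (S10 n)) a -> is_series (fun n => f (S01 n)) b ->
  l = f S000 + f S110 + a + b.
Proof.
  intros [a' [b' [Ha [Hb E]]]] Ha2 Hb2.
  apply is_series_unique in Ha. apply is_series_unique in Hb.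
  apply is_series_unique in Ha2. apply is_series_unique in Hb2.
  rewrite E. rewrite <- Ha, <- Hb, Ha2, Hb2. reflexivity.
Qed.

Lemma sseq_0 p q ps du : (1 <= du)%nat -> sseq p q ps du 0 = q.
Proof.
  intros Hdu. unfold sseq. destruct (Nat.leb du 1) eqn:E.
  - apply Nat.leb_le in E. replace du with 1%nat by lia. simpl. ring.
  - simpl. ring.
Qed.

Lemma sseq_S p q ps du n : sseq p q ps du (S n) =
  sseq p q ps du n * (if Nat.leb du (S n) then (1-p)*(1-ps) else 1-p).
Proof.
  unfold sseq. destruct (Nat.leb du (S n)) eqn:E.
  - apply Nat.leb_le in E.
    replace (Nat.leb du (S (S n))) with true by (symmetry; apply Nat.leb_le; lia).
    replace (S (S n) - du)%nat with (S (S n - du)) by lia. simpl pow. ring.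
  - apply Nat.leb_gt in E. destruct (Nat.leb du (S (S n))) eqn:E2.
    + apply Nat.leb_le in E2. replace (S (S n) - du)%nat with 0%nat by lia.
      replace (du - 1)%nat with (S n) by lia. simpl pow. ring.
    + simpl pow. ring.
Qed.

Lemma rseq_S p q ps n : rseq p q ps (S n) = rseq p q ps n * ((1-q)*(1-ps)).
Proof. unfold rseq. simpl pow. ring. Qed.

Lemma solve_lin p q ps du x0 x1 : 0 < p < 1 -> 0 < q < 1 -> 0 < ps <= 1 ->
  x0 = x0*(1-p) + x1*0 + a1d p q ps * x0 * q + Bd p q ps du * x1 * ((1-p)*ps) ->
  1 = x0 + x1 + a1d p q ps * x0 + b1d p q ps du * x1 ->
  x0 = N0 p q ps du /\ x1 = N1 p q ps du.
Proof.
  intros Hp Hq Hs E1 E2.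
  destruct (consts_pos p q ps du Hp Hq Hs) as (Ha&HA&HB&Hb&HD&_).
  destruct (basic_facts p q ps Hp Hq Hs) as [F1 F2].
  pose proof (bal_Z p q ps du Hp Hq Hs) as BZ.
  set (u := (1-p)*Bd p q ps du) in *. set (v := (1-q)*Ad p q ps) in *.
  assert (Hv : 0 < v) by (unfold v; apply Rmult_lt_0_compat; lra).
  assert (Hc : p - a1d p q ps * q = p*ps/(1-(1-q)*(1-ps))) by (unfold a1d; field; lra).
  assert (Hc0 : 0 < p*ps/(1-(1-q)*(1-ps))) by (apply div_pos; [apply Rmult_lt_0_compat|]; lra).
  set (c := p - a1d p q ps * q) in *.
  assert (Ex0 : x0 * c = Bd p q ps du * ((1-p)*ps) * x1) by (unfold c; lra).
  assert (Eu : u * c = Bd p q ps du * ((1-p)*ps) * v) by (unfold c; lra).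
  assert (Exv : x0 * v = u * x1).
  { apply (Rmult_eq_reg_r c); [|lra].
    transitivity ((x0 * c) * v); [ring|]. rewrite Ex0.
    transitivity ((u * c) * x1); [|ring]. rewrite Eu. ring. }
  assert (HDd : Dd p q ps du = (1 + a1d p q ps) * u + (1 + b1d p q ps du) * v) by (unfold Dd, u, v; ring).
  assert (Ex1 : v = x1 * Dd p q ps du).
  { rewrite HDd. transitivity (v * (x0 + x1 + a1d p q ps * x0 + b1d p q ps du * x1)); [rewrite <- E2; ring|].
    transitivity ((x0 * v) * (1 + a1d p q ps) + x1 * v * (1 + b1d p q ps du)); [ring|].
    rewrite Exv. ring. }
  assert (H1 : x1 = N1 p q ps du) by (unfold N1; fold v; rewrite Ex1; field; lra).
  split; [|exact H1].
  unfold N0. fold u. apply (Rmult_eq_reg_r v); [|lra]. rewrite Exv, H1. unfold N1. fold v. field. lra.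
Qed.

Lemma is_series_ext_R (a b : nat -> R) (l : R) : (forall n, a n = b n) -> is_series a l -> is_series b l.
Proof. apply is_series_ext. Qed.

Ltac tvs := cbn [tv Nat.eqb]; rewrite ?Nat.eqb_refl.

Lemma stat_fwd p q ps du nu : 0 < p < 1 -> 0 < q < 1 -> 0 < ps <= 1 -> (1 <= du)%nat ->
  stationary p q ps (switching 0 du) nu ->
  nu S000 = N0 p q ps du /\ nu S110 = N1 p q ps du /\
  (forall n, nu (S10 n) = rseq p q ps n * N0 p q ps du) /\
  (forall n, nu (S01 n) = sseq p q ps du n * N1 p q ps du).
Proof.
  intros Hp Hq Hs Hdu [Hpos [Hnorm Hst]].
  assert (Hst' : forall s', sum_state (fun s => nu s * tv p q ps du s s') (nu s')).
  { intros s'. eapply sum_state_ext; [|apply Hst]. intros s. simpl. rewrite trans_tv by auto. reflexivity. }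
  assert (H10_0 : nu (S10 0) = nu S000 * (p*(1-ps))).
  { pose proof (sum_state_eq _ _ 0 0 (Hst' (S10 0))) as E.
    rewrite E; [tvs; ring| |]; apply series_zero'; intros n; tvs; ring. }
  assert (H10_S : forall m, nu (S10 (S m)) = nu (S10 m) * ((1-q)*(1-ps))).
  { intros m. pose proof (sum_state_eq _ _ (nu (S10 m) * ((1-q)*(1-ps))) 0 (Hst' (S10 (S m)))) as E.
    rewrite E; [tvs; ring| |].
    - replace (nu (S10 m) * ((1 - q) * (1 - ps))) with (nu (S10 m) * tv p q ps du (S10 m) (S10 (S m)))
        by (tvs; reflexivity).
      apply (series_single (fun n => nu (S10 n) * tv p q ps du (S10 n) (S10 (S m)))).
      intros n Hn. tvs. replace (Nat.eqb n m) with false by (symmetry; apply Nat.eqb_neq; exact Hn). ring.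
    - apply series_zero'; intros n; tvs; ring. }
  assert (H01_0 : nu (S01 0) = nu S110 * q).
  { pose proof (sum_state_eq _ _ 0 0 (Hst' (S01 0))) as E.
    rewrite E; [tvs; ring| |]; apply series_zero'; intros n; tvs; [ring|].
    destruct (Nat.leb du (S n)); ring. }
  assert (H01_S : forall m, nu (S01 (S m)) =
             nu (S01 m) * (if Nat.leb du (S m) then (1-p)*(1-ps) else 1-p)).
  { intros m. pose proof (sum_state_eq _ _ 0 (nu (S01 m) * (if Nat.leb du (S m) then (1-p)*(1-ps) else 1-p))
       (Hst' (S01 (S m)))) as E.
    rewrite E; [tvs; ring| |].
    - apply series_zero'; intros n; tvs; ring.
    - replace (nu (S01 m) * (if Nat.leb du (S m) then (1-p)*(1-ps) else 1-p))
        with (nu (S01 m) * tv p q ps du (S01 m) (S01 (S m))) by (tvs; reflexivity).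
      apply (series_single (fun n => nu (S01 n) * tv p q ps du (S01 n) (S01 (S m)))).
      intros n Hn. tvs. replace (Nat.eqb n m) with false by (symmetry; apply Nat.eqb_neq; exact Hn). ring. }
  assert (R10 : forall n, nu (S10 n) = rseq p q ps n * nu S000).
  { induction n as [|n IH]. - rewrite H10_0. unfold rseq. simpl. ring.
    - rewrite H10_S, IH, rseq_S. ring. }
  assert (R01 : forall n, nu (S01 n) = sseq p q ps du n * nu S110).
  { induction n as [|n IH]. - rewrite H01_0, sseq_0 by auto. ring.
    - rewrite H01_S, IH, sseq_S. ring. }
  assert (EN : 1 = nu S000 + nu S110 + a1d p q ps * nu S000 + b1d p q ps du * nu S110).
  { pose proof (sum_state_eq _ _ (a1d p q ps * nu S000) (b1d p q ps du * nu S110) Hnorm) as E.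
    rewrite E; [ring| |].
    - apply (is_series_ext_R (fun n => rseq p q ps n * nu S000)); [intros n; symmetry; apply R10|].
      apply is_series_scal_r. apply rseq_series; auto.
    - apply (is_series_ext_R (fun n => sseq p q ps du n * nu S110)); [intros n; symmetry; apply R01|].
      apply is_series_scal_r. apply sseq_series; auto. }
  assert (EZ : nu S000 = nu S000*(1-p) + nu S110*0 + a1d p q ps * nu S000 * q
                 + Bd p q ps du * nu S110 * ((1-p)*ps)).
  { pose proof (sum_state_eq _ _ (a1d p q ps * nu S000 * q) (Bd p q ps du * nu S110 * ((1-p)*ps)) (Hst' S000)) as E.
    rewrite E at 1; [tvs; ring| |].
    - apply (is_series_ext_R (fun n => rseq p q ps n * (nu S000 * q))).
      + intros n. tvs. rewrite R10. ring.
      + replace (a1d p q ps * nu S000 * q) with (a1d p q ps * (nu S000 * q)) by ring.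
        apply is_series_scal_r. apply rseq_series; auto.
    - apply (is_series_ext_R (fun n => tseq p q ps du n * (nu S110 * ((1-p)*ps)))).
      + intros n. tvs. rewrite R01. unfold tseq. destruct (Nat.leb du (S n)); ring.
      + replace (Bd p q ps du * nu S110 * ((1-p)*ps)) with (Bd p q ps du * (nu S110 * ((1-p)*ps))) by ring.
        apply is_series_scal_r. apply tseq_series; auto. }
  destruct (solve_lin p q ps du (nu S000) (nu S110) Hp Hq Hs EZ EN) as [X0 X1].
  split; [exact X0|]. split; [exact X1|]. split.
  - intros n. rewrite R10, X0. reflexivity.
  - intros n. rewrite R01, X1. reflexivity.
Qed.

Lemma stat_bwd p q ps du nu : 0 < p < 1 -> 0 < q < 1 -> 0 < ps <= 1 -> (1 <= du)%nat ->
  nu S000 = N0 p q ps du -> nu S110 = N1 p q ps du ->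
  (forall n, nu (S10 n) = rseq p q ps n * N0 p q ps du) ->
  (forall n, nu (S01 n) = sseq p q ps du n * N1 p q ps du) ->
  stationary p q ps (switching 0 du) nu.
Proof.
  intros Hp Hq Hs Hdu X0 X1 R10 R01.
  destruct (consts_pos p q ps du Hp Hq Hs) as (Ha&HA&HB&Hb&HD&HN0&HN1).
  destruct (basic_facts p q ps Hp Hq Hs) as [F1 F2].
  assert (Hr : forall n, 0 <= rseq p q ps n).
  { intros n. unfold rseq. apply Rmult_le_pos; [apply Rmult_le_pos; lra|]. apply pow_le; lra. }
  assert (Hsq : forall n, 0 <= sseq p q ps du n).
  { intros n. unfold sseq. destruct (Nat.leb du (S n)).
    - apply Rmult_le_pos; [apply Rmult_le_pos; [lra|apply pow_le; lra]|]. apply pow_le; lra.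
    - apply Rmult_le_pos; [lra|apply pow_le; lra]. }
  split; [|split].
  - intros s. destruct s; [rewrite X0|rewrite X1|rewrite R10|rewrite R01]; try lra;
      apply Rmult_le_pos; auto; lra.
  - exists (a1d p q ps * N0 p q ps du), (b1d p q ps du * N1 p q ps du). split; [|split].
    + apply (is_series_ext_R (fun n => rseq p q ps n * N0 p q ps du)); [intros n; symmetry; apply R10|].
      apply is_series_scal_r. apply rseq_series; auto.
    + apply (is_series_ext_R (fun n => sseq p q ps du n * N1 p q ps du)); [intros n; symmetry; apply R01|].
      apply is_series_scal_r. apply sseq_series; auto.
    + rewrite X0, X1. symmetry. rewrite <- (norm_id p q ps du Hp Hq Hs). ring.
  - intros s'. apply (sum_state_ext (fun s => nu s * tv p q ps du s s')).
    { intros s. rewrite trans_tv by auto. reflexivity. }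
    destruct s' as [| |m|m].
    + exists (a1d p q ps * N0 p q ps du * q), (Bd p q ps du * N1 p q ps du * ((1-p)*ps)). split; [|split].
      * apply (is_series_ext_R (fun n => rseq p q ps n * (N0 p q ps du * q))).
        -- intros n. tvs. rewrite R10. ring.
        -- replace (a1d p q ps * N0 p q ps du * q) with (a1d p q ps * (N0 p q ps du * q)) by ring.
           apply is_series_scal_r. apply rseq_series; auto.
      * apply (is_series_ext_R (fun n => tseq p q ps du n * (N1 p q ps du * ((1-p)*ps)))).
        -- intros n. tvs. rewrite R01. unfold tseq. destruct (Nat.leb du (S n)); ring.
        -- replace (Bd p q ps du * N1 p q ps du * ((1-p)*ps)) with (Bd p q ps du * (N1 p q ps du * ((1-p)*ps))) by ring.
           apply is_series_scal_r. apply tseq_series; auto.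
      * tvs. rewrite X0, X1. pose proof (bal_Z p q ps du Hp Hq Hs) as BZ.
        unfold N0, N1, Rdiv.
        transitivity (((1-p)*Bd p q ps du*(1-p) + a1d p q ps * ((1-p)*Bd p q ps du) * q
          + Bd p q ps du * ((1-q)*Ad p q ps) * (1-p) * ps) * / Dd p q ps du).
        -- rewrite <- BZ. reflexivity.
        -- ring.
    + exists ((1-q)*ps * (a1d p q ps * N0 p q ps du)), (p * (b1d p q ps du * N1 p q ps du)). split; [|split].
      * apply (is_series_ext_R (fun n => rseq p q ps n * (N0 p q ps du * ((1-q)*ps)))).
        -- intros n. tvs. rewrite R10. ring.
        -- replace ((1-q)*ps * (a1d p q ps * N0 p q ps du)) with (a1d p q ps * (N0 p q ps du * ((1-q)*ps))) by ring.
           apply is_series_scal_r. apply rseq_series; auto.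
      * apply (is_series_ext_R (fun n => sseq p q ps du n * (N1 p q ps du * p))).
        -- intros n. tvs. rewrite R01. ring.
        -- replace (p * (b1d p q ps du * N1 p q ps du)) with (b1d p q ps du * (N1 p q ps du * p)) by ring.
           apply is_series_scal_r. apply sseq_series; auto.
      * tvs. rewrite X0, X1. pose proof (bal_O p q ps du Hp Hq Hs) as BO.
        unfold N0, N1, Rdiv.
        transitivity (((1-p)*Bd p q ps du*(p*ps) + (1-q)*Ad p q ps*(1-q)
          + a1d p q ps * ((1-p)*Bd p q ps du) * ((1-q)*ps) + b1d p q ps du * ((1-q)*Ad p q ps) * p) * / Dd p q ps du).
        -- rewrite <- BO. reflexivity.
        -- ring.
    + destruct m as [|m].
      * exists 0, 0. split; [|split].
        -- apply series_zero'. intros n. tvs. ring.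
        -- apply series_zero'. intros n. tvs. ring.
        -- tvs. rewrite R10, X0. unfold rseq. simpl. ring.
      * exists (nu (S10 m) * ((1-q)*(1-ps))), 0. split; [|split].
        -- replace (nu (S10 m) * ((1 - q) * (1 - ps))) with (nu (S10 m) * tv p q ps du (S10 m) (S10 (S m)))
             by (tvs; reflexivity).
           apply (series_single (fun n => nu (S10 n) * tv p q ps du (S10 n) (S10 (S m)))).
           intros n Hn. tvs. replace (Nat.eqb n m) with false by (symmetry; apply Nat.eqb_neq; exact Hn). ring.
        -- apply series_zero'. intros n. tvs. ring.
        -- tvs. rewrite !R10, rseq_S. ring.
    + destruct m as [|m].
      * exists 0, 0. split; [|split].
        -- apply series_zero'. intros n. tvs. ring.
        -- apply series_zero'. intros n. tvs. ring.
        -- tvs. rewrite R01, X1, sseq_0 by auto. ring.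
      * exists 0, (nu (S01 m) * (if Nat.leb du (S m) then (1-p)*(1-ps) else 1-p)). split; [|split].
        -- apply series_zero'. intros n. tvs. ring.
        -- replace (nu (S01 m) * (if Nat.leb du (S m) then (1-p)*(1-ps) else 1-p))
             with (nu (S01 m) * tv p q ps du (S01 m) (S01 (S m))) by (tvs; reflexivity).
           apply (series_single (fun n => nu (S01 n) * tv p q ps du (S01 n) (S01 (S m)))).
           intros n Hn. tvs. replace (Nat.eqb n m) with false by (symmetry; apply Nat.eqb_neq; exact Hn). ring.
        -- tvs. rewrite !R01, sseq_S. ring.
Qed.

Lemma stat_final p q ps du nu : 0 < p < 1 -> 0 < q < 1 -> 0 < ps <= 1 -> (1 <= du)%nat ->
  stationary p q ps (switching 0 du) nu <->
  (nu S000 = N0 p q ps du /\ nu S110 = N1 p q ps du /\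
   (forall k : nat, (1 <= k)%nat ->
      nu (S10 (k - 1)) = p * (1-ps) * ((1-q) * (1-ps)) ^ (k - 1) * N0 p q ps du) /\
   (forall k : nat, (1 <= k <= du)%nat ->
      nu (S01 (k - 1)) = q * (1-p) ^ (k - 1) * N1 p q ps du) /\
   (forall k : nat, (du < k)%nat ->
      nu (S01 (k - 1)) = q * (1-p) ^ (du - 1) * ((1-p) * (1-ps)) ^ (k - du) * N1 p q ps du)).
Proof.
  intros Hp Hq Hs Hdu. split.
  - intros H. destruct (stat_fwd p q ps du nu Hp Hq Hs Hdu H) as (X0&X1&R10&R01).
    split; [exact X0|]. split; [exact X1|]. split; [|split].
    + intros k Hk. destruct k as [|n]; [lia|]. replace (S n - 1)%nat with n by lia.
      rewrite R10. unfold rseq. ring.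
    + intros k Hk. destruct k as [|n]; [lia|]. replace (S n - 1)%nat with n by lia.
      rewrite R01. unfold sseq. destruct (Nat.leb du (S n)) eqn:E.
      * apply Nat.leb_le in E. replace (du - 1)%nat with n by lia.
        replace (S n - du)%nat with 0%nat by lia. simpl pow. ring.
      * reflexivity.
    + intros k Hk. destruct k as [|n]; [lia|]. replace (S n - 1)%nat with n by lia.
      rewrite R01. unfold sseq.
      replace (Nat.leb du (S n)) with true by (symmetry; apply Nat.leb_le; lia). reflexivity.
  - intros (X0&X1&H10&H01a&H01b).
    apply stat_bwd; auto.
    + intros n. specialize (H10 (S n)). replace (S n - 1)%nat with n in H10 by lia.
      rewrite H10 by lia. unfold rseq. ring.
    + intros n. unfold sseq. destruct (Nat.leb du (S n)) eqn:E.
      * apply Nat.leb_le in E. destruct (Nat.eq_dec du (S n)) as [Ed|Ed].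
        -- specialize (H01a (S n)). replace (S n - 1)%nat with n in H01a by lia.
           rewrite H01a by lia. replace (du - 1)%nat with n by lia.
           replace (S n - du)%nat with 0%nat by lia. simpl pow. ring.
        -- specialize (H01b (S n)). replace (S n - 1)%nat with n in H01b by lia.
           rewrite H01b by lia. reflexivity.
      * apply Nat.leb_gt in E. specialize (H01a (S n)). replace (S n - 1)%nat with n in H01a by lia.
        rewrite H01a by lia. reflexivity.
Qed.

Theorem lemma1 (p q ps beta lambda : R) (du : nat) :
  0 < p < 1 -> 0 < q < 1 -> 0 < ps <= 1 -> 0 <= beta <= 1 -> 0 <= lambda ->
  (1 <= du)%nat ->
  let pf := 1 - ps in
  let pb := 1 - p in
  let qb := 1 - q in
  let a1 := p * pf / (1 - qb * pf) in
  let A := p / (qb * (1 - qb * pf)) in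
  let B := q * pb ^ (du - 1) / (1 - pb * pf) in
  let b1 := q * (1 - pb ^ (du - 1)) / (1 - pb) + B in
  let D := (1 + a1) * pb * B + (1 + b1) * qb * A in
  let n000 := pb * B / D in
  let n110 := qb * A / D in
  let psi (x : R) (y : nat) :=
    (1 - (x + (1 - x) * INR y) * x ^ (y - 1)) / (1 - x) ^ 2
    + (x * pf + (1 - x * pf) * INR y) * x ^ (y - 1) / (1 - x * pf) ^ 2 in
  let pi := switching 0 du in
  (forall nu : State -> R,
     stationary p q ps pi nu <->
     (nu S000 = n000 /\ nu S110 = n110 /\
      (forall k : nat, (1 <= k)%nat ->
         nu (S10 (k - 1)) = p * pf * (qb * pf) ^ (k - 1) * n000) /\
      (forall k : nat, (1 <= k <= du)%nat ->
         nu (S01 (k - 1)) = q * pb ^ (k - 1) * n110) /\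
      (forall k : nat, (du < k)%nat ->
         nu (S01 (k - 1)) = q * pb ^ (du - 1) * (pb * pf) ^ (k - du) * n110)))
  /\
  avg_cost p q ps beta lambda pi =
    Finite (beta * p * pf * n000 / (1 - qb * pf) ^ 2
            + (1 - beta) * q * psi pb du * n110
            + lambda * ((1 + a1) * n000 + B * n110)).
Proof.
  intros H1 H2 H3 H4 H5 H6.
  exact (conj (fun nu => stat_final p q ps du nu H1 H2 H3 H6) (cost_limit p q ps beta lambda du H1 H2 H3 H6)).
Qed.
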